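(* Let $g\ge0$, $n\ge1$. Let $[Ch_1]$ and $[Ch_2]$ be two chambers up to symmetry, and let $\mathcal{A}\in Ch_1\in[Ch_1]$, $\mathcal{B}\in Ch_2\in[Ch_2]$ be weight data. If $[Ch_1]\le[Ch_2]$, there is an inclusion as a full subcategory $\mathcal{G}_{g,\mathcal{A}}\hookrightarrow\mathcal{G}_{g,\mathcal{B}}$; it is an isomorphism of categories if $[Ch_1]=[Ch_2]$.
   Context: A weight datum is $\mathcal{A}=(a_1,\dots,a_n)$ with $a_i\in\mathbb{Q}\cap(0,1]$ and $2g-2+\sum_i a_i>0$; $\mathcal{D}_{g,n}\subset\mathbb{R}^n$ is the set of weight data. For $S\subseteq\{1,\dots,n\}$ with $2\le|S|\le n$ if $g\ge1$ (resp. $2\le|S|\le n-2$ if $g=0$), the wall $w_S$ is the locus $\sum_{i\in S}a_i=1$. The chambers are the connected components of the complement in $\mathcal{D}_{g,n}$ of all walls; each is determined by the direction ($<1$ or $>1$) of $\sum_{i\in S}a_i$ for each such $S$. The set $\mathbf{K}$ of chambers is partially ordered by $Ch_1\le Ch_2$ iff for every such $S$, $\sum_{i\in S}a_i>1$ on $Ch_1$ implies $\sum_{i\in S}b_i>1$ on $Ch_2$. $S_n$ acts on $\mathcal{D}_{g,n}$ by permuting coordinates and hence on $\mathbf{K}$; a chamber up to symmetry $[Ch]$ is the $S_n$-orbit of $Ch$, and $[Ch_1]\le[Ch_2]$ iff there are $Ch_1'\in[Ch_1]$, $Ch_2'\in[Ch_2]$ with $Ch_1'\le Ch_2'$. A $(g,\mathcal{A})$-stable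 graph is a finite connected graph $G$ (loops and multiple edges allowed) with vertex weight $w:V(G)\to\mathbb{Z}_{\ge0}$ and $n$ legs labelled $1,\dots,n$ attached via $m:\{1,\dots,n\}\to V(G)$, with $b_1(G)+\sum_v w(v)=g$ and $2w(v)-2+|v|_E+|v|_{\mathcal{A}}>0$ for every vertex $v$, where $|v|_E$ is the number of edge half-edges at $v$ (loops counted twice) and $|v|_{\mathcal{A}}=\sum_{m(i)=v}a_i$. $\mathcal{G}_{g,\mathcal{A}}$ is the category whose objects are $(g,\mathcal{A})$-stable graphs and whose morphisms are compositions of isomorphisms of weighted marked graphs and weighted edge contractions. *)

(* Defs.v *)
From HB Require Import structures.
From mathcomp Require Import all_boot all_order all_algebra all_fingroup.
Set Implicit Arguments. Unset Strict Implicit. Unset Printing Implicit Defensive.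
Import Order.TTheory GRing.Theory Num.Theory.
Local Open Scope int_scope.
Local Open Scope nat_scope.

Section Weights.
Variable n : nat.

Definition weight_datum (g : nat) (A : 'I_n -> rat) : Prop :=
  (forall i, (0 < A i)%R /\ (A i <= 1)%R) /\
  (0 < 2 * (g%:R) - 2 + \sum_(i < n) A i)%R.

(* S indexes a wall w_S *)
Definition admissible (g : nat) (S : {set 'I_n}) : bool :=
  (2 <= #|S|) && (#|S| <= (if g == 0 then n - 2 else n)).

Definition wsum (A : 'I_n -> rat) (S : {set 'I_n}) : rat := \sum_(i in S) A i.

Definition in_chamber (g : nat) (A : 'I_n -> rat) : Prop :=
  weight_datum g A /\ forall S, admissible g S -> wsum A S != 1%R.

Definition chamber_le (g : nat) (A B : 'I_n -> rat) : Prop :=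
  forall S, admissible g S -> (1 < wsum A S)%R -> (1 < wsum B S)%R.

Definition same_chamber (g : nat) (A B : 'I_n -> rat) : Prop :=
  forall S, admissible g S -> (1 < wsum A S)%R = (1 < wsum B S)%R.

Definition permw (s : 'S_n) (A : 'I_n -> rat) : 'I_n -> rat :=
  fun i => A ((s^-1)%g i).

Definition sym_chamber_le (g : nat) (A B : 'I_n -> rat) : Prop :=
  exists s1 s2 : 'S_n, chamber_le g (permw s1 A) (permw s2 B).

Definition sym_chamber_eq (g : nat) (A B : 'I_n -> rat) : Prop :=
  exists s : 'S_n, same_chamber g (permw s A) B.

End Weights.

(* Vertices are 'I_nv, half-edges are 'I_nh; each half-edge h is attached
   to the vertex vert h, and the fixed-point-free involution inv pairs
   half-edges into edges (a loop has both half-edges at the same vertex). *)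
Record sgraph (n : nat) := SGraph {
  nv : nat;
  nh : nat;
  vert : {ffun 'I_nh -> 'I_nv};
  inv : {ffun 'I_nh -> 'I_nh};
  leg : {ffun 'I_n -> 'I_nv};
  wt : {ffun 'I_nv -> nat} }.

Section Graphs.
Variable n : nat.
Implicit Types G : sgraph n.

Definition adj G : rel 'I_(nv G) :=
  fun u v => [exists h, (vert G h == u) && (vert G (inv G h) == v)].

Arguments adj : clear implicits.

Definition well_formed G : Prop :=
  (forall h, inv G (inv G h) = h /\ inv G h != h) /\
  (forall u v, connect (adj G) u v).

(* first Betti number of a connected graph: |E| - |V| + 1 *)
Definition betti1 G : int := (((nh G)./2)%:Z - (nv G)%:Z + 1)%R.

(* |v|_E : number of half-edges at v (loops counted twice) *)
Definition degE G (v : 'I_(nv G)) : nat := #|[set h | vert G h == v]|.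

Definition degA G (A : 'I_n -> rat) (v : 'I_(nv G)) : rat :=
  \sum_(i < n | leg G i == v) A i.

Definition stable_graph (g : nat) (A : 'I_n -> rat) G : Prop :=
  well_formed G /\
  (betti1 G + (\sum_(v < nv G) wt G v)%:Z)%R = g%:Z /\
  forall v, (0 < 2 * (wt G v)%:R - 2 + (degE v)%:R + degA A v)%R.

Record gmap (G G' : sgraph n) := GMap {
  mV : {ffun 'I_(nv G) -> 'I_(nv G')};
  mH : {ffun 'I_(nh G') -> 'I_(nh G)} }.

Definition gid G : gmap G G := GMap [ffun v => v] [ffun h => h].

Arguments gid : clear implicits.

Definition gcomp G G' G'' (f : gmap G G') (f' : gmap G' G'') : gmap G G'' :=
  GMap [ffun v => mV f' (mV f v)] [ffun h => mH f (mH f' h)].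

Definition compat G G' (f : gmap G G') : Prop :=
  (forall h', inv G (mH f h') = mH f (inv G' h')) /\
  (forall h', mV f (vert G (mH f h')) = vert G' h') /\
  (forall i, mV f (leg G i) = leg G' i).

Definition is_iso G G' (f : gmap G G') : Prop :=
  compat f /\ bijective (mV f) /\ bijective (mH f) /\
  (forall v, wt G' (mV f v) = wt G v).

Definition is_contraction G G' (f : gmap G G') (h : 'I_(nh G)) : Prop :=
  let a := vert G h in let b := vert G (inv G h) in
  compat f /\ injective (mH f) /\
  (forall x, (x \in codom (mH f)) = (x != h) && (x != inv G h)) /\
  (forall v', exists v, mV f v = v') /\
  (forall x y, (mV f x == mV f y) =
               [|| x == y, (x == a) && (y == b) | (x == b) && (y == a)]) /\
  (forall v, v != a -> v != b -> wt G' (mV f v) = wt G v) /\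
  wt G' (mV f a) = wt G a + (if a == b then 1 else wt G b).

(* morphisms of the category whose objects satisfy P: compositions of
   isomorphisms and weighted edge contractions, passing through objects *)
Inductive gen (P : sgraph n -> Prop) : forall G G', gmap G G' -> Prop :=
| gen_id G : gen P (gid G)
| gen_iso G G' (f : gmap G G') : is_iso f -> gen P f
| gen_contr G G' (f : gmap G G') h : is_contraction f h -> gen P f
| gen_comp G G' G'' (f : gmap G G') (f' : gmap G' G'') :
    P G' -> gen P f -> gen P f' -> gen P (gcomp f f').

(* the category with objects {G | P G}; for P = stable_graph g A this is G_{g,A} *)
Definition Obj (P : sgraph n -> Prop) := {G : sgraph n | P G}.

Definition Hom (P : sgraph n -> Prop) (X Y : Obj P) :=
  {f : gmap (sval X) (sval Y) | gen P f}.

Definition idH (P : sgraph n -> Prop) (X : Obj P) : Hom X X :=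
  exist _ (gid (sval X)) (gen_id P (sval X)).

Definition compH (P : sgraph n -> Prop) (X Y Z : Obj P)
  (f : Hom X Y) (f' : Hom Y Z) : Hom X Z :=
  exist _ (gcomp (sval f) (sval f'))
    (gen_comp (proj2_sig Y) (proj2_sig f) (proj2_sig f')).

Record functor (P Q : sgraph n -> Prop) := Functor {
  Fo : Obj P -> Obj Q;
  Fm : forall X Y : Obj P, Hom X Y -> Hom (Fo X) (Fo Y);
  Fm_id : forall X, Fm (idH X) = idH (Fo X);
  Fm_comp : forall X Y Z (f : Hom X Y) (f' : Hom Y Z),
      Fm (compH f f') = compH (Fm f) (Fm f') }.

Definition fully_faithful P Q (F : functor P Q) : Prop :=
  forall X Y, bijective (@Fm P Q F X Y).

Definition full_inclusion P Q (F : functor P Q) : Prop :=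
  injective (Fo F) /\ fully_faithful F.

Definition cat_iso P Q (F : functor P Q) : Prop :=
  bijective (Fo F) /\ fully_faithful F.

End Graphs.

(* Main.v *)
Set Warnings "-notation-overridden,-ambiguous-paths".
Require Import Defs.
From HB Require Import structures.
From mathcomp Require Import all_boot all_order all_algebra all_fingroup.
From Stdlib Require Import ProofIrrelevance FunctionalExtensionality Classical.
Set Implicit Arguments. Unset Strict Implicit. Unset Printing Implicit Defensive.
From mathcomp Require Import zify ring lra.
Import Order.TTheory GRing.Theory Num.Theory.
Section Relab.
Variable n : nat.
Implicit Types G X Y : sgraph n.

Definition rl (s : 'S_n) G : sgraph n :=
  SGraph (vert G) (Defs.inv G) [ffun i => leg G (s i)] (wt G).

Lemma rlK (s : 'S_n) G : rl (s^-1)%g (rl s G) = G.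
Proof.
case: G => nv nh v i l w; rewrite /rl /=; f_equal.
by apply/ffunP => j; rewrite !ffunE permKV.
Qed.

Lemma rlKV (s : 'S_n) G : rl s (rl (s^-1)%g G) = G.
Proof.
case: G => nv nh v i l w; rewrite /rl /=; f_equal.
by apply/ffunP => j; rewrite !ffunE permK.
Qed.

Lemma rl_inj (s : 'S_n) X Y : rl s X = rl s Y -> X = Y.
Proof. by move=> /(congr1 (rl (s^-1)%g)); rewrite !rlK. Qed.

Definition relab (s : 'S_n) X Y (f : gmap X Y) : gmap (rl s X) (rl s Y) :=
  @GMap n (rl s X) (rl s Y) (mV f) (mH f).

Definition unrel (s : 'S_n) X1 X2 G1 G2 (h1 : rl s X1 = G1) (h2 : rl s X2 = G2)
  : gmap G1 G2 -> gmap X1 X2 :=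
  match h1 in _ = G1' return gmap G1' G2 -> gmap X1 X2 with
  | erefl => match h2 in _ = G2' return gmap (rl s X1) G2' -> gmap X1 X2 with
    | erefl => fun f => @GMap n X1 X2 (mV f) (mH f) end end.

Lemma unrel_id (s : 'S_n) X G (h1 h2 : rl s X = G) : unrel h1 h2 (gid G) = gid X.
Proof. rewrite (proof_irrelevance _ h2 h1); by destruct h1. Qed.

Lemma unrel_comp (s : 'S_n) X1 X' X2 G G' G'' (h1 : rl s X1 = G) (h' : rl s X' = G')
  (h2 : rl s X2 = G'') (f : gmap G G') (f' : gmap G' G'') :
  unrel h1 h2 (gcomp f f') = gcomp (unrel h1 h' f) (unrel h' h2 f').
Proof. by destruct h1, h', h2. Qed.

Lemma compat_relab (s : 'S_n) X Y (f : gmap X Y) : compat f -> compat (relab s f).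
Proof.
case=> [h1 [h2 h3]]; split; first exact: h1; split; first exact: h2.
by move=> i; rewrite /= !ffunE; apply: h3.
Qed.

Lemma compat_unrel (s : 'S_n) X Y (f : gmap (rl s X) (rl s Y)) :
  compat f -> compat (unrel erefl erefl f).
Proof.
case=> [h1 [h2 h3]]; split; first exact: h1; split; first exact: h2.
move=> i; have := h3 ((s^-1)%g i); by rewrite /= !ffunE permKV.
Qed.

Lemma iso_relab (s : 'S_n) X Y (f : gmap X Y) : is_iso f -> is_iso (relab s f).
Proof. by case=> [c r]; split; [exact: compat_relab | exact: r]. Qed.

Lemma iso_unrel (s : 'S_n) X Y (f : gmap (rl s X) (rl s Y)) :
  is_iso f -> is_iso (unrel erefl erefl f).
Proof. by case=> [c r]; split; [exact: compat_unrel | exact: r]. Qed.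

Lemma contr_relab (s : 'S_n) X Y (f : gmap X Y) h :
  is_contraction f h -> is_contraction (relab s f) h.
Proof. by case=> [c r]; split; [exact: compat_relab | exact: r]. Qed.

Lemma contr_unrel (s : 'S_n) X Y (f : gmap (rl s X) (rl s Y)) h :
  is_contraction f h -> is_contraction (unrel erefl erefl f) h.
Proof. by case=> [c r]; split; [exact: compat_unrel | exact: r]. Qed.

Lemma fwd (s : 'S_n) (P Q : sgraph n -> Prop) (H : forall G, P G -> Q (rl s G)) :
  forall G1 G2 (f : gmap G1 G2), gen P f -> gen Q (relab s f).
Proof.
move=> G1 G2 f Hg; elim: G1 G2 f / Hg.
- move=> G; exact: (gen_id Q (rl s G)).
- move=> G G' f Hf; apply: gen_iso; exact: iso_relab.
- move=> G G' f h Hf; exact: gen_contr (contr_relab s Hf).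
- move=> G G' G'' f f' PG' _ IH _ IH'.
  exact: (gen_comp (H _ PG') IH IH').
Qed.

Lemma back (s : 'S_n) (P Q : sgraph n -> Prop)
  (HPi : forall X Y (f : gmap X Y), is_iso f -> P X -> P Y)
  (HPc : forall X Y (f : gmap X Y) h, is_contraction f h -> P X -> P Y) :
  forall G1 G2 (f : gmap G1 G2), gen Q f -> forall X1 X2 (h1 : rl s X1 = G1)
    (h2 : rl s X2 = G2), P X1 -> P X2 /\ gen P (unrel h1 h2 f).
Proof.
move=> G1 G2 f Hg; elim: G1 G2 f / Hg.
- move=> G X1 X2 h1 h2 PX1.
  have e : X1 = X2 by apply: (@rl_inj s); rewrite h1 h2.
  subst X2; rewrite unrel_id; split => //; exact: gen_id.
- move=> G G' f Hf X1 X2 h1 h2 PX1; subst G G'.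
  have Hi := iso_unrel Hf; split; [exact: HPi Hi PX1 | exact: gen_iso].
- move=> G G' f h Hf X1 X2 h1 h2 PX1; subst G G'.
  have Hi := contr_unrel Hf; split; [exact: HPc Hi PX1 | exact: gen_contr Hi].
- move=> G G' G'' f f' _ _ IH _ IH' X1 X2 h1 h2 PX1.
  have h' := rlKV s G'.
  have [PX' g1] := IH X1 _ h1 h' PX1.
  have [PX2 g2] := IH' _ X2 h' h2 PX'.
  split => //; rewrite (unrel_comp h1 h' h2); exact: gen_comp PX' g1 g2.
Qed.

Lemma sig_eq (T : Type) (P : T -> Prop) (x y : sig P) : sval x = sval y -> x = y.
Proof.
case: x y => [x px] [y py] /= e; subst y; by rewrite (proof_irrelevance _ px py).
Qed.

Section Func.
Variables (s : 'S_n) (P Q : sgraph n -> Prop).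
Hypothesis H1 : forall G, P G -> Q (rl s G).
Hypothesis HPi : forall X Y (f : gmap X Y), is_iso f -> P X -> P Y.
Hypothesis HPc : forall X Y (f : gmap X Y) h, is_contraction f h -> P X -> P Y.

Definition FoR (X : Obj P) : Obj Q := exist _ (rl s (sval X)) (H1 (proj2_sig X)).
Definition FmR (X Y : Obj P) (f : Defs.Hom X Y) : Defs.Hom (FoR X) (FoR Y) :=
  exist _ (relab s (sval f)) (fwd H1 (proj2_sig f)).

Lemma Fm_id' (X : Obj P) : FmR (idH X) = idH (FoR X).
Proof. exact: sig_eq. Qed.

Lemma Fm_comp' (X Y Z : Obj P) (f : Defs.Hom X Y) (f' : Defs.Hom Y Z) :
  FmR (compH f f') = compH (FmR f) (FmR f').
Proof. exact: sig_eq. Qed.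

Definition TheF : functor P Q := Functor Fm_id' Fm_comp'.

Lemma TheF_full : full_inclusion TheF.
Proof.
split.
  move=> X Y e; apply: sig_eq; apply: (@rl_inj s); exact: (congr1 sval e).
move=> X Y.
pose g (f' : Defs.Hom (FoR X) (FoR Y)) : Defs.Hom X Y :=
  exist _ (unrel erefl erefl (sval f'))
    (proj2 (back HPi HPc (proj2_sig f') erefl erefl (proj2_sig X))).
exists g.
  by move=> [f pf]; apply: sig_eq => /=; case: f pf.
by move=> [f pf]; apply: sig_eq => /=; case: f pf.
Qed.

Hypothesis H3 : forall G, Q G -> P (rl (s^-1)%g G).

Lemma TheF_iso : cat_iso TheF.
Proof.
split; last by case: TheF_full.
exists (fun Y : Obj Q => exist P (rl (s^-1)%g (sval Y)) (H3 (proj2_sig Y))).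
  by move=> X; apply: sig_eq; rewrite /= rlK.
by move=> Y; apply: sig_eq; rewrite /= rlKV.
Qed.

End Func.
End Relab.

Lemma connect_map (T T' : finType) (e : rel T) (e' : rel T') (f : T -> T') :
  (forall x y, e x y -> connect e' (f x) (f y)) ->
  forall x y, connect e x y -> connect e' (f x) (f y).
Proof.
move=> H x y /connectP [p]; elim: p x => [|z p IH] x /=; first by move=> _ ->.
case/andP=> exz pz ey; exact: connect_trans (H _ _ exz) (IH _ pz ey).
Qed.

Lemma sum_surj (T T' : finType) (f : T -> T') (D : {pred T}) (F : T' -> nat) :
  {in D &, injective f} -> (forall y, exists2 x, x \in D & f x = y) ->
  \sum_y F y = \sum_(x in D) F (f x).
Proof.
move=> inj sur; rewrite -(big_imset F inj); apply: eq_bigl => y.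
symmetry; apply/imsetP; case: (sur y) => x Dx <-; by exists x.
Qed.

Lemma card_surj (T T' : finType) (f : T -> T') (D : {pred T}) :
  {in D &, injective f} -> (forall y, exists2 x, x \in D & f x = y) ->
  #|T'| = #|D|.
Proof.
move=> inj sur; rewrite -(card_in_imset inj); apply: eq_card => y.
symmetry; apply/imsetP; case: (sur y) => x Dx <-; by exists x.
Qed.

Section Stab.
Variables (n g : nat) (A : 'I_n -> rat).
Implicit Types G : sgraph n.

Lemma iso_stable G G' (f : gmap G G') :
  is_iso f -> stable_graph g A G -> stable_graph g A G'.
Proof.
case=> [[ci [cv cl]] [bV [bH cw]]].
case: (bV) => gV gVK gKV; case: (bH) => gH hK hKV.
case=> [[hinv hconn] [hgen hst]].
have mHinj : injective (mH f) := can_inj hK.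
have mVinj : injective (mV f) := can_inj gVK.
split; [split|split].
- move=> h'; have [i1 i2] := hinv (mH f h'); split.
    by apply: mHinj; rewrite -!ci.
  apply/eqP => e; move/eqP: i2; apply; by rewrite ci e.
- move=> u' v'; rewrite -[u']gKV -[v']gKV; apply: connect_map (hconn _ _).
  move=> x y /existsP [k /andP [/eqP hx /eqP hy]]; apply: connect1.
  apply/existsP; exists (gH k); rewrite -!cv -ci hKV hx hy !eqxx //.
- have Enh : nh G' = nh G.
    by have := bij_eq_card bH; rewrite !card_ord.
  have Env : nv G' = nv G.
    by have := bij_eq_card bV; rewrite !card_ord.
  have Esum : \sum_(v < nv G') wt G' v = \sum_(v < nv G) wt G v.
    rewrite (reindex (mV f)) /=; last by exists gV => x _; [apply: gVK | apply: gKV].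
    by apply: eq_bigr => v _; rewrite cw.
  by rewrite Esum /betti1 Enh Env.
- move=> v'; rewrite -[v']gKV; set v := gV v'.
  have EE : degE (mV f v) = degE v.
    rewrite /degE -(card_imset _ mHinj); apply: eq_card => k'.
    rewrite [in RHS]inE; apply/imsetP/idP.
      by case=> h' H ->; rewrite inE -cv (inj_eq mVinj) in H.
    move=> H; exists (gH k'); last by rewrite hKV.
    by rewrite inE -cv hKV (inj_eq mVinj).
  have EA : degA A (mV f v) = degA A v.
    by rewrite /degA; apply: eq_bigl => i; rewrite -cl (inj_eq mVinj).
  by rewrite cw EE EA; apply: hst.
Qed.


Lemma contr_stable G G' (f : gmap G G') h :
  is_contraction f h -> stable_graph g A G -> stable_graph g A G'.
Proof.
case=> [[ci [cv cl]] [mHinj [cod [surj [fib [cw cwa]]]]]].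
set a := vert G h in fib cw cwa; set b := vert G (Defs.inv G h) in fib cw cwa.
case=> [[hinv hconn] [hgen hst]].
have [hii hne] := hinv h.
have fab y : (mV f y == mV f a) = (y == a) || (y == b).
  by rewrite fib eqxx andbT; case: (y == a).
have fx x y : x != a -> x != b -> (mV f y == mV f x) = (y == x).
  by move=> xa xb; rewrite fib (negbTE xa) (negbTE xb) !andbF !orbF.
have mba : mV f b = mV f a by apply/eqP; rewrite fab eqxx orbT.
split; [split|split].
- move=> h'; have [i1 i2] := hinv (mH f h'); split.
    by apply: mHinj; rewrite -!ci.
  apply/eqP => e; move/eqP: i2; apply; by rewrite ci e.
- move=> u' v'; have [u <-] := surj u'; have [v <-] := surj v'.
  apply: connect_map (hconn _ _).
  move=> x y /existsP [k /andP [/eqP hx /eqP hy]].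
  case kc: (k \in codom (mH f)).
    case/codomP: kc => k' ek; apply: connect1.
    apply/existsP; exists k'; rewrite -!cv -ci -ek hx hy !eqxx //.
  move: kc; rewrite cod => /negbT; rewrite negb_and !negbK => /orP [] /eqP ek.
    by rewrite -hx -hy ek -/a -/b mba connect0.
  by rewrite -hx -hy ek hii -/a -/b mba connect0.
- have Enh : nh G = (nh G').+2.
    have := cardC (pred2 h (Defs.inv G h)); rewrite card2 eq_sym hne card_ord.
    move=> <-; rewrite add2n; congr _.+2.
    rewrite -[nh G']card_ord -(card_codom mHinj); apply: eq_card => k.
    by rewrite !inE cod negb_or.
  rewrite /betti1 Enh /= in hgen.
  have [ab|ab] := eqVneq a b.
    have mVinj : injective (mV f).
      by move=> x y /eqP; rewrite fib -ab; case/or3P => [/eqP//|/andP[/eqP-> /eqP->]|/andP[/eqP-> /eqP->]].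
    have Env : nv G' = nv G.
      rewrite -[nv G']card_ord -[nv G]card_ord.
      apply: (card_surj (D := predT)) => [x y _ _|y]; first exact: mVinj.
      by have [x <-] := surj y; exists x.
    have Esum : (\sum_(v < nv G') wt G' v = (\sum_(v < nv G) wt G v).+1)%N.
      have i1 : {in predT &, injective (mV f)} by move=> x y _ _; apply: mVinj.
      have s1 : forall y, exists2 x, x \in predT & mV f x = y.
        by move=> y; have [x <-] := surj y; exists x.
      rewrite (sum_surj _ i1 s1).
      rewrite (bigD1 a) //= [in RHS](bigD1 a) //= cwa -ab eqxx addn1 addSn; congr _.+1.
      by congr (_ + _)%N; apply: eq_bigr => v va; rewrite cw // -ab.
    rewrite Esum /betti1 Env; move: hgen.
    set m := (nh G')./2. set q := (\sum_(v < nv G) wt G v).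
    move=> <-; lia.
  have i2 : {in [pred x | x != b] &, injective (mV f)}.
    move=> x y; rewrite !inE => xb yb /eqP; rewrite fib (negbTE yb) (negbTE xb).
    by rewrite !andbF !orbF => /eqP.
  have s2 : forall y, exists2 x, x \in [pred x | x != b] & mV f x = y.
    move=> y; have [x <-] := surj y; case: (eqVneq x b) => [->|xb].
      by exists a; rewrite ?inE // mba.
    by exists x.
  have Env : nv G = (nv G').+1.
    rewrite -[nv G']card_ord (card_surj i2 s2).
    have := cardC1 b; rewrite card_ord => ->.
    have : 0 < nv G by case: (b) => m; case: (nv G).
    case: (nv G) => // m _ /=; apply: eq_card => x; by rewrite !inE.
  have Esum : \sum_(v < nv G') wt G' v = \sum_(v < nv G) wt G v.
    rewrite (sum_surj _ i2 s2) (bigD1 a) ?inE //= cwa (negbTE ab).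
    rewrite [in RHS](bigD1 b) //= [in RHS](bigD1 a) //=.
    rewrite [RHS]addnCA addnA; congr (_ + _)%N.
    apply: eq_big => x; first by rewrite !inE andbC.
    by move=> /andP [xb xa]; rewrite cw.
  rewrite Esum /betti1; move: hgen.
  set m := (nh G')./2. set q := (\sum_(v < nv G) wt G v).
  rewrite Env; move=> <-; lia.
- move=> v'; have [x <-] := surj v'.
  case: (boolP ((x == a) || (x == b))) => [xab|].
    have -> : mV f x = mV f a by apply/eqP; rewrite fab.
    set T := [set k | (vert G k == a) || (vert G k == b)].
    have ET : (degE (mV f a)).+2 = #|T|.
      rewrite /degE -(card_imset _ mHinj).
      have -> : mH f @: [set k | vert G' k == mV f a] = T :\ h :\ Defs.inv G h.
        apply/setP => k; rewrite !inE; apply/imsetP/idP.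
          case=> k'; rewrite inE -cv fab => H ->.
          have : mH f k' \in codom (mH f) by apply: codom_f.
          by rewrite cod => /andP [k1 k2]; rewrite H k1 k2.
        case/andP => k1 /andP [k2 k3].
        have : k \in codom (mH f) by rewrite cod k1 k2.
        case/codomP => k' ek; exists k' => //; by rewrite inE -cv fab -ek.
      have hT : h \in T by rewrite inE -/a eqxx.
      have iT : Defs.inv G h \in T :\ h by rewrite !inE hne -/b eqxx orbT.
      by rewrite (cardsD1 h T) hT (cardsD1 (Defs.inv G h) (T :\ h)) iT.
    have EA : degA A (mV f a) = (\sum_(i < n | (leg G i == a) || (leg G i == b)) A i)%R.
      by rewrite /degA; apply: eq_bigl => i; rewrite -cl fab.
    have [ab|ab] := eqVneq a b.
      have ET2 : #|T| = degE a.
        by apply: eq_card => k; rewrite !inE -ab orbb.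
      have EA2 : degA A (mV f a) = degA A a.
        by rewrite EA; apply: eq_bigl => i; rewrite -ab orbb.
      have e : (a == b) = true by apply/eqP. move: (hst a); rewrite cwa e EA2 -ET2 -ET.
      rewrite -addn2 !natrD; set w := ((wt G a)%:R)%R; set e1 := ((degE _)%:R)%R; set d := degA A a; lra.
    have ET2 : #|T| = (degE a + degE b)%N.
      rewrite /degE -cardsUI.
      have -> : [set k | vert G k == a] :&: [set k | vert G k == b] = set0.
        apply/setP => k; rewrite !inE; apply/negbTE; apply/negP => /andP [/eqP -> /eqP e].
        by move/eqP: ab.
      rewrite cards0 addn0; apply: eq_card => k; by rewrite !inE.
    have EA2 : degA A (mV f a) = (degA A a + degA A b)%R.
      rewrite EA (bigID (fun i => leg G i == a)) /=; congr (_ + _)%R.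
        by rewrite /degA; apply: eq_bigl => i; rewrite andbC; case: (leg G i == a).
      rewrite /degA; apply: eq_bigl => i; case: (eqVneq (leg G i) a) => [->|ne].
        by rewrite (negbTE ab).
      by rewrite /= andbT.
    move: (hst a) (hst b); rewrite cwa (negbTE ab) EA2.
    have := ET; rewrite ET2 => /(congr1 (fun m => m%:R : rat)).
    rewrite -addn2 !natrD.
    set wa := ((wt G a)%:R)%R; set wb := ((wt G b)%:R)%R.
    set ea := ((degE a)%:R)%R; set eb := ((degE b)%:R)%R.
    set e' := ((degE (mV f a))%:R)%R; set da := degA A a; set db := degA A b.
    move=> E Ha Hb; lra.
  rewrite negb_or => /andP [xa xb].
  have EE : degE (mV f x) = degE x.
    rewrite /degE -(card_imset _ mHinj); apply: eq_card => k.
    rewrite [in RHS]inE; apply/imsetP/idP.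
      by case=> k'; rewrite inE -cv (fx _ _ xa xb) => H ->.
    move=> H; have : k \in codom (mH f).
      rewrite cod; apply/andP; split; apply/eqP => e; move: H; rewrite e.
        by rewrite -/a eq_sym (negbTE xa).
      by rewrite -/b eq_sym (negbTE xb).
    case/codomP => k' ek; exists k' => //; by rewrite inE -cv -ek (fx _ _ xa xb).
  have EA : degA A (mV f x) = degA A x.
    by rewrite /degA; apply: eq_bigl => i; rewrite -cl (fx _ _ xa xb).
  by rewrite cw // EE EA; apply: hst.
Qed.

End Stab.

Section Cham.
Variables (n g : nat).
Implicit Types (A B : 'I_n -> rat) (G : sgraph n).

Lemma weight_perm (s : 'S_n) A : weight_datum g A -> weight_datum g (permw s A).
Proof.
case=> [b sA]; split; first by move=> i; apply: b.
have -> : (\sum_(i < n) permw s A i = \sum_(i < n) A i)%R => //.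
by rewrite (reindex_inj (h := s) perm_inj); apply: eq_bigr => i _; rewrite /permw permK.
Qed.

Lemma wsum_perm (t : 'S_n) A (S : {set 'I_n}) : wsum (permw t A) S = wsum A ((t^-1)%g @: S).
Proof. by rewrite /wsum big_imset //; move=> x y _ _; apply: perm_inj. Qed.

Lemma adm_perm (t : 'S_n) (S : {set 'I_n}) : admissible g ((t^-1)%g @: S) = admissible g S.
Proof. by rewrite /admissible card_imset //; apply: perm_inj. Qed.

Lemma chamber_perm (t : 'S_n) A B :
  chamber_le g A B -> chamber_le g (permw t A) (permw t B).
Proof.
move=> c S adm; rewrite !wsum_perm; apply: c; by rewrite adm_perm.
Qed.

Lemma permw_comp (s t : 'S_n) A : permw t (permw s A) = permw (s * t)%g A.
Proof. by apply: functional_extensionality => i; rewrite /permw invMg permM. Qed.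

Lemma permw1 A : permw 1%g A = A.
Proof. by apply: functional_extensionality => i; rewrite /permw invg1 perm1. Qed.

Lemma degA_rl (s : 'S_n) G B (v : 'I_(nv G)) : degA (G := rl s G) B v = degA (G := G) (permw s B) v.
Proof.
rewrite /degA (reindex_inj (h := (s^-1)%g) perm_inj) /=.
by apply: eq_bigl => i; rewrite ffunE permKV.
Qed.

Lemma stable_rl (s : 'S_n) G B :
  stable_graph g (permw s B) G -> stable_graph g B (rl s G).
Proof.
case=> [wf [gn st]]; split; first exact: wf.
split; first exact: gn.
move=> v; rewrite degA_rl; exact: st.
Qed.


Lemma wsum_le_card A (S : {set 'I_n}) : (forall i, A i <= 1)%R -> (wsum A S <= #|S|%:R)%R.
Proof.
move=> h; rewrite /wsum -sumr_const; apply: ler_sum => i _; exact: h.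
Qed.

Lemma wsum_ge0 A (S : {set 'I_n}) : (forall i, 0 < A i)%R -> (0 <= wsum A S)%R.
Proof. by move=> h; apply: sumr_ge0 => i _; apply: ltW. Qed.

Lemma transfer A B G : weight_datum g A -> weight_datum g B -> chamber_le g A B ->
  stable_graph g A G -> stable_graph g B G.
Proof.
move=> [bA sA] [bB sB] cle [wf [gn st]]; split => //; split => // v.
have := st v.
set S := [set i | leg G i == v].
have dS C : degA C v = wsum C S by rewrite /degA /wsum; apply: eq_bigl => i; rewrite inE.
rewrite !dS.
have BA0 : (0 <= wsum B S)%R by apply: wsum_ge0 => i; case: (bB i).
have Ec : (2 * (wt G v)%:R - 2 + (degE v)%:R = ((2 * wt G v + degE v)%N)%:R - 2 :> rat)%R.
  by rewrite natrD natrM; ring.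
rewrite !Ec.
have [c3|] := leqP 3 (2 * wt G v + degE v)%N.
  move: c3; rewrite -(ler_nat rat) => c3 _; lra.
rewrite ltnS leq_eqVlt => /orP [/eqP -> |].
  move=> H; have [S0|[i iS]] := set_0Vmem S.
    by move: H; rewrite S0 /wsum big_set0; lra.
  rewrite /wsum (bigD1 i) //=.
  have : (0 <= \sum_(j in S | j != i) B j)%R by apply: sumr_ge0 => j _; apply: ltW; case: (bB j).
  case: (bB i) => Bi _; lra.
rewrite ltnS leq_eqVlt => /orP [/eqP -> |].
  move=> H.
  have HA : (1 < wsum A S)%R by lra.
  have cS : (2 <= #|S|)%N.
    rewrite leqNgt; apply/negP => c1.
    have := wsum_le_card S (fun i => proj2 (bA i)).
    have : (#|S|%:R <= 1 :> rat)%R by rewrite lern1 -ltnS.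
    lra.
  suff : (1 < wsum B S)%R by lra.
  case: (boolP (admissible g S)) => adm; first exact: cle.
  have g0 : g = 0%N.
    move: adm; rewrite /admissible cS /=; case: (g) => // g'.
    by move=> /negP []; have := max_card S; rewrite card_ord.
  subst g.
  move: adm; rewrite /admissible cS /= -ltnNge => cS2.
  have split : (\sum_(i < n) B i = wsum B S + wsum B (~: S))%R.
    rewrite (bigID (fun i => i \in S)) /= /wsum; congr (_ + _)%R.
    apply: eq_big => // i; by rewrite in_setC.
  have cC : (#|~: S| <= 1)%N.
    rewrite cardsCs card_ord setCK.
    have cS3 : (n - 2 < #|S|)%N by exact: cS2.
    clear cS2; have := max_card S; rewrite card_ord; lia.
  have := wsum_le_card (~: S) (fun i => proj2 (bB i)).
  have : (#|~: S|%:R <= 1 :> rat)%R by rewrite lern1.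
  move: sB; rewrite split; lra.
rewrite ltnS leqn0 addn_eq0 muln_eq0 /= => /andP [/eqP w0 /eqP e0] _.
(* the graph is a single vertex *)
have nov : forall k, vert G k != v.
  move=> k; apply/negP => kv.
  have : k \in [set h | vert G h == v] by rewrite inE.
  by move: e0; rewrite /degE => /cards0_eq ->; rewrite inE.
have allv : forall u, u = v.
  move=> u; have := (proj2 wf) v u; case/connectP => [[|x p]] /=; first by move=> _ ->.
  case/andP => /existsP [k /andP [/eqP kv _]] _ _.
  by move: (nov k); rewrite kv eqxx.
have nh0 : nh G = 0%N.
  rewrite -[nh G]card_ord -e0 /degE; apply: eq_card => k.
  by rewrite inE (allv (vert G k)) eqxx.
have nv1 : nv G = 1%N.
  rewrite -[nv G]card_ord -(card1 v); apply: eq_card => u.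
  by rewrite (allv u) !inE ?eqxx.
have sw : (\sum_(u < nv G) wt G u = wt G v)%N.
  rewrite (bigD1 v) //= big1 ?addn0 // => u uv.
  by rewrite (allv u) eqxx in uv.
have g0 : g = 0%N.
  move: gn; rewrite sw w0 /betti1 nh0 nv1 /=; lia.
subst g.
have dB : wsum B S = (\sum_(i < n) B i)%R.
  rewrite /wsum; apply: eq_bigl => i; by rewrite inE (allv (leg G i)) eqxx.
rewrite w0 e0 /=; move: sB; rewrite dB /= ?mulr0n ?mulr0; lra.
Qed.

End Cham.

Theorem mainTheorem5 (g n : nat) (A B : 'I_n -> rat) :
  (1 <= n)%N ->
  in_chamber g A -> in_chamber g B ->
  sym_chamber_le g A B ->
  exists F : functor (stable_graph g A) (stable_graph g B),
    full_inclusion F /\ (sym_chamber_eq g A B -> cat_iso F).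
Proof.
move=> _ [wA _] [wB _] sle.
have HPi : forall X Y (f : gmap X Y), is_iso f -> stable_graph g A X -> stable_graph g A Y.
  by move=> X Y f; apply: iso_stable.
have HPc : forall X Y (f : gmap X Y) h, is_contraction f h -> stable_graph g A X -> stable_graph g A Y.
  by move=> X Y f h; apply: contr_stable.
have mk : forall s : 'S_n, chamber_le g A (permw s B) ->
    forall G, stable_graph g A G -> stable_graph g B (rl s G).
  move=> s c G sG; apply: stable_rl; apply: (transfer wA (weight_perm s wB) c sG).
case: (classic (sym_chamber_eq g A B)) => [[s se]|nse].
  have c1 : chamber_le g (permw s A) B by move=> S adm H; rewrite -(se S adm).
  have c2 : chamber_le g B (permw s A) by move=> S adm H; rewrite (se S adm).
  have c3 : chamber_le g A (permw (s^-1)%g B).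
    by have := chamber_perm (t := (s^-1)%g) c1; rewrite permw_comp mulgV permw1.
  have H1 := mk _ c3.
  have H3 : forall G, stable_graph g B G -> stable_graph g A (rl ((s^-1)^-1)%g G).
    move=> G sG; apply: stable_rl; rewrite invgK.
    exact: (transfer wB (weight_perm s wA) c2 sG).
  exists (TheF H1); split; first exact: TheF_full HPi HPc.
  by move=> _; apply: TheF_iso HPi HPc H3.
case: sle => s1 [s2 c].
have c3 : chamber_le g A (permw (s2 * s1^-1)%g B).
  by have := chamber_perm (t := (s1^-1)%g) c; rewrite !permw_comp mulgV permw1.
have H1 := mk _ c3.
exists (TheF H1); split; first exact: TheF_full HPi HPc.
by move=> /nse.
Qed.
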